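(* In the one-dimensional perturbed elephant random walk with stops, suppose $\epsilon+r\neq1$ and $\gamma=\frac{1-\epsilon}{2}$. Then for all $t\ge1$ $$\mathbb{E}[X_t^2]=\frac{t}{\epsilon+r}-\frac{1}{(\epsilon+r)\Gamma(1-\epsilon-r)}\,\frac{\Gamma(t+1-\epsilon-r)}{\Gamma(t)},$$ and hence $\displaystyle\lim_{t\to\infty}\frac{\mathbb{E}[X_t^2]}{t}=\frac{1}{\epsilon+r}$.
   Context: One-dimensional perturbed elephant random walk with stops (perturbed ERWS): fix $p,q,r\in(0,1)$ with $p+q+r=1$, $\epsilon\in(0,1)$ and $s\in(0,1)$, and set $\gamma=p-q$. The steps $\sigma_1,\sigma_2,\dots$ take values in $\{-1,0,1\}$, $X_0=0$ and $X_t=\sigma_1+\dots+\sigma_t$. The first step satisfies $P(\sigma_1=1)=s$, $P(\sigma_1=-1)=1-s$. For $t\ge1$, conditionally on $\sigma_1,\dots,\sigma_t$, an index $k\in\{1,\dots,t\}$ is chosen uniformly at random. If $\sigma_k=\pm1$, then $\sigma_{t+1}=\sigma_k$ with probability $p$, $\sigma_{t+1}=-\sigma_k$ with probability $q$, and $\sigma_{t+1}=0$ with probability $r$. If $\sigma_k=0$, then $\sigma_{t+1}=1$ with probability $\epsilon/2$, $\sigma_{t+1}=-1$ with probability $\epsilon/2$, and $\sigma_{t+1}=0$ with probability $1-\epsilon$. *)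

(* Defs.v *)
From Stdlib Require Import Reals Lra List ZArith ClassicalEpsilon.
Import ListNotations.
Open Scope R_scope.

(* ---------- Euler's Gamma function (Gauss limit definition) ----------
   Gamma z = lim_{n->oo} n! n^z / (z (z+1) ... (z+n)),
   valid for all z not in {0,-1,-2,...}. *)
Fixpoint rising_prod (z : R) (n : nat) : R :=
  match n with
  | O => z
  | S m => rising_prod z m * (z + INR (S m))
  end.

Definition gauss_seq (z : R) (n : nat) : R :=
  INR (fact n) * Rpower (INR n) z / rising_prod z n.

Definition Gamma (z : R) : R :=
  epsilon (inhabits 0) (fun l => Un_cv (gauss_seq z) l).

(* ---------- perturbed elephant random walk with stops ----------
   Histories are lists of steps in {-1,0,1}, MOST RECENT STEP FIRST. *)

(* Probability that sigma_{t+1} = x given that the uniformly chosen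
   earlier step sigma_k equals sgm. *)
Definition kernel (p q r eps : R) (sgm x : Z) : R :=
  if Z.eqb sgm 0 then
    (if Z.eqb x 0 then 1 - eps
     else if Z.eqb x 1 then eps / 2
     else if Z.eqb x (-1) then eps / 2 else 0)
  else
    (if Z.eqb x sgm then p
     else if Z.eqb x (- sgm) then q
     else if Z.eqb x 0 then r else 0).

Definition first_step (s : R) (x : Z) : R :=
  if Z.eqb x 1 then s else if Z.eqb x (-1) then 1 - s else 0.

(* P(sigma_{t+1} = x | sigma_1..sigma_t = h), t = length h >= 1,
   k uniform in {1..t}. *)
Definition step_prob (p q r eps : R) (h : list Z) (x : Z) : R :=
  / INR (length h) * fold_right (fun k acc => kernel p q r eps k x + acc) 0 h.

Fixpoint path_prob (p q r eps s : R) (l : list Z) : R :=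
  match l with
  | [] => 1
  | [x] => first_step s x
  | x :: h => path_prob p q r eps s h * step_prob p q r eps h x
  end.

Fixpoint paths (n : nat) : list (list Z) :=
  match n with
  | O => [ [] ]
  | S m => flat_map (fun l => map (fun x => x :: l) [-1; 0; 1]%Z) (paths m)
  end.

Definition position (l : list Z) : Z := fold_right Z.add 0%Z l.

Definition second_moment (p q r eps s : R) (t : nat) : R :=
  fold_right (fun l acc => path_prob p q r eps s l * (IZR (position l)) ^ 2 + acc)
             0 (paths t).

(* Main.v *)
Require Import Defs.
From Stdlib Require Import Reals Lra Lia List ZArith ClassicalEpsilon.
Import ListNotations.
Open Scope R_scope.

Definition sumL {A : Type} (g : A -> R) (L : list A) : R :=
  fold_right (fun x acc => g x + acc) 0 L.

Lemma sumL_app {A} (g : A -> R) l1 l2 : sumL g (l1 ++ l2) = sumL g l1 + sumL g l2.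
Proof. induction l1; simpl; [ring| unfold sumL in *; simpl; rewrite IHl1; ring]. Qed.

Lemma sumL_flat_map {A B} (g : B -> R) (F : A -> list B) L :
  sumL g (flat_map F L) = sumL (fun a => sumL g (F a)) L.
Proof. induction L; simpl; [reflexivity|]. rewrite sumL_app, IHL. reflexivity. Qed.

Lemma sumL_map {A B} (g : B -> R) (F : A -> B) L : sumL g (map F L) = sumL (fun a => g (F a)) L.
Proof. induction L; simpl; [reflexivity|]. unfold sumL in *; simpl; rewrite IHL; reflexivity. Qed.

Lemma sumL_ext_in {A} (g1 g2 : A -> R) L : (forall x, In x L -> g1 x = g2 x) -> sumL g1 L = sumL g2 L.
Proof. induction L; intros H; simpl; [reflexivity|]. unfold sumL in *; simpl.
  rewrite H by (left; auto). rewrite IHL; auto. intros; apply H; right; auto. Qed.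

Lemma sumL_scal {A} (c : R) (g : A -> R) L : sumL (fun x => c * g x) L = c * sumL g L.
Proof. induction L; unfold sumL in *; simpl; [ring|]. rewrite IHL; ring. Qed.

Lemma sumL_plus {A} (g1 g2 : A -> R) L : sumL (fun x => g1 x + g2 x) L = sumL g1 L + sumL g2 L.
Proof. induction L; unfold sumL in *; simpl; [ring|]. rewrite IHL; ring. Qed.

Lemma sumL_exch {A B} (F : A -> B -> R) (L1 : list A) (L2 : list B) :
  sumL (fun a => sumL (fun b => F a b) L2) L1 = sumL (fun b => sumL (fun a => F a b) L1) L2.
Proof. induction L1; unfold sumL in *; simpl.
  - induction L2; simpl; [reflexivity| rewrite <- IHL2; ring].
  - rewrite IHL1. clear IHL1. induction L2; simpl; [ring|]. rewrite <- IHL2. ring. Qed.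

Lemma sumL_cons {A} (g : A -> R) x L : sumL g (x :: L) = g x + sumL g L.
Proof. reflexivity. Qed.

Definition valid (k : Z) : Prop := k = (-1)%Z \/ k = 0%Z \/ k = 1%Z.
Definition Xs : list Z := [-1; 0; 1]%Z.

Lemma paths_prop t h : In h (paths t) -> length h = t /\ Forall valid h.
Proof.
  revert h; induction t; intros h Hin; simpl in Hin.
  - destruct Hin as [<-|[]]. split; auto.
  - apply in_flat_map in Hin. destruct Hin as [l [Hl Hm]].
    destruct (IHt l Hl) as [Hlen Hf].
    simpl in Hm. destruct Hm as [<-|[<-|[<-|[]]]]; simpl; split; auto;
      constructor; auto; unfold valid; auto.
Qed.

Definition E (p q r eps s : R) (t : nat) (f : list Z -> R) : R :=
  sumL (fun l => path_prob p q r eps s l * f l) (paths t).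

Lemma E_succ p q r eps s t f : (1 <= t)%nat ->
  E p q r eps s (S t) f =
  E p q r eps s t (fun h => sumL (fun x => step_prob p q r eps h x * f (x :: h)) Xs).
Proof.
  intros Ht. unfold E. change (paths (S t)) with (flat_map (fun l => map (fun x => x :: l) Xs) (paths t)). rewrite sumL_flat_map. apply sumL_ext_in.
  intros h Hin. destruct (paths_prop t h Hin) as [Hl _].
  rewrite sumL_map. rewrite <- sumL_scal. apply sumL_ext_in. intros x _.
  destruct h as [|k h']; [simpl in Hl; lia|].
  change (path_prob p q r eps s (x :: k :: h')) with
    (path_prob p q r eps s (k :: h') * step_prob p q r eps (k :: h') x).
  ring.
Qed.

Definition Nz (h : list Z) : R := sumL (fun k => IZR k ^ 2) h.

Lemma kern_valid p q r eps (hpqr : p + q + r = 1) k A B C : valid k ->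
  sumL (fun x => kernel p q r eps k x * (A + B * IZR x + C * IZR x ^ 2)) Xs =
  A + B * (p - q) * IZR k + C * ((1 - r - eps) * IZR k ^ 2 + eps).
Proof.
  intros [->|[->| ->]]; unfold sumL, Xs, kernel; cbn -[IZR]; replace r with (1 - p - q) by lra; field.
Qed.

Lemma sumL_valid_lin (a b c : R) h : Forall valid h ->
  sumL (fun k => a + b * IZR k + c * IZR k ^ 2) h =
  a * INR (length h) + b * IZR (position h) + c * Nz h.
Proof.
  induction h as [|k h IH]; intros Hf.
  - unfold Nz, sumL; simpl; ring.
  - inversion Hf; subst. unfold Nz in *. rewrite !sumL_cons.
    rewrite IH by assumption. simpl position. simpl length. rewrite plus_IZR, S_INR. ring.
Qed.

Lemma step_moment p q r eps (hpqr : p + q + r = 1) h A B C :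
  Forall valid h -> (1 <= length h)%nat ->
  sumL (fun x => step_prob p q r eps h x * (A + B * IZR x + C * IZR x ^ 2)) Xs =
  A + B * (p - q) * IZR (position h) / INR (length h)
    + C * ((1 - r - eps) * Nz h + eps * INR (length h)) / INR (length h).
Proof.
  intros Hf Hl.
  assert (Hn : INR (length h) <> 0) by (apply not_0_INR; lia).
  unfold step_prob.
  transitivity (/ INR (length h) *
    sumL (fun k => sumL (fun x => kernel p q r eps k x * (A + B * IZR x + C * IZR x ^ 2)) Xs) h).
  - rewrite sumL_exch, <- sumL_scal. apply sumL_ext_in. intros x _.
    change (fold_right (fun k acc => kernel p q r eps k x + acc) 0 h)
      with (sumL (fun k => kernel p q r eps k x) h).
    rewrite Rmult_assoc. f_equal. rewrite Rmult_comm, <- sumL_scal.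
    apply sumL_ext_in. intros; ring.
  - rewrite (sumL_ext_in _ (fun k => A + (B * (p - q)) * IZR k + (C * (1 - r - eps)) * IZR k ^ 2 + C * eps)).
    2:{ intros k Hk. rewrite kern_valid; auto. ring. rewrite Forall_forall in Hf; auto. }
    rewrite sumL_plus, sumL_valid_lin by auto.
    replace (sumL (fun _ : Z => C * eps) h) with (C * eps * INR (length h)).
    2:{ clear. induction h; [unfold sumL; simpl; ring|]. rewrite sumL_cons, <- IHh. simpl length. rewrite S_INR. ring. }
    field. auto.
Qed.

Lemma E_lin p q r eps s t (F1 F2 : list Z -> R) c1 c2 c3 :
  E p q r eps s t (fun h => c1 * F1 h + c2 * F2 h + c3) =
  c1 * E p q r eps s t F1 + c2 * E p q r eps s t F2 + c3 * E p q r eps s t (fun _ => 1).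
Proof. unfold E. induction (paths t); unfold sumL in *; simpl; [ring|]. rewrite IHl. ring. Qed.

Lemma E_ext p q r eps s t f g : (forall h, In h (paths t) -> f h = g h) ->
  E p q r eps s t f = E p q r eps s t g.
Proof. intros H. unfold E. apply sumL_ext_in. intros; rewrite H; auto. Qed.

Definition mm p q r eps s t := E p q r eps s t (fun l => IZR (position l) ^ 2).
Definition nn p q r eps s t := E p q r eps s t Nz.
Definition ee p q r eps s t := E p q r eps s t (fun _ => 1).

Lemma rec_all p q r eps s (hpqr : p + q + r = 1) t : (1 <= t)%nat ->
  mm p q r eps s (S t) = mm p q r eps s t * (1 + 2 * (p - q) / INR t)
      + (1 - r - eps) / INR t * nn p q r eps s t + eps * ee p q r eps s t /\
  nn p q r eps s (S t) = nn p q r eps s t * (1 + (1 - r - eps) / INR t) + eps * ee p q r eps s t /\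
  ee p q r eps s (S t) = ee p q r eps s t.
Proof.
  intros Ht. unfold mm, nn, ee. rewrite !E_succ by auto.
  assert (Hn : INR t <> 0) by (apply not_0_INR; lia).
  split; [|split].
  - transitivity (E p q r eps s t (fun h => (1 + 2 * (p - q) / INR t) * IZR (position h) ^ 2
        + ((1 - r - eps) / INR t) * Nz h + eps)).
    2:{ rewrite E_lin. ring. }
    apply E_ext. intros h Hin. destruct (paths_prop t h Hin) as [Hl Hf].
    rewrite (sumL_ext_in _ (fun x => step_prob p q r eps h x *
       (IZR (position h) ^ 2 + 2 * IZR (position h) * IZR x + 1 * IZR x ^ 2))).
    2:{ intros x _. change (position (x :: h)) with (x + position h)%Z. rewrite plus_IZR. ring. }
    rewrite step_moment by (auto; lia). rewrite Hl. field. auto.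
  - transitivity (E p q r eps s t (fun h => (1 + (1 - r - eps) / INR t) * Nz h + 0 * Nz h + eps)).
    2:{ rewrite E_lin. ring. }
    apply E_ext. intros h Hin. destruct (paths_prop t h Hin) as [Hl Hf].
    rewrite (sumL_ext_in _ (fun x => step_prob p q r eps h x *
       (Nz h + 0 * IZR x + 1 * IZR x ^ 2))).
    2:{ intros x _. unfold Nz, sumL. simpl. ring. }
    rewrite step_moment by (auto; lia). rewrite Hl. field. auto.
  - apply E_ext. intros h Hin. destruct (paths_prop t h Hin) as [Hl Hf].
    rewrite (sumL_ext_in _ (fun x => step_prob p q r eps h x * (1 + 0 * IZR x + 0 * IZR x ^ 2))).
    2:{ intros; ring. }
    rewrite step_moment by (auto; lia). field. rewrite Hl; auto.
Qed.

Lemma base_vals p q r eps s : mm p q r eps s 1 = 1 /\ nn p q r eps s 1 = 1 /\ ee p q r eps s 1 = 1.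
Proof.
  unfold mm, nn, ee, E, Nz, sumL, first_step; cbn -[IZR]; repeat split; lra.
Qed.

Fixpoint Hs (a : R) (j : nat) : R :=
  match j with
  | O => a
  | S j' => Hs a j' * (INR (S j') + a) / INR (S j')
  end.

Lemma closed_form p q r eps s (hpqr : p + q + r = 1) (hu : 0 < eps + r) (ha : 1 - eps - r <> 0)
  (hg : p - q = (1 - eps) / 2) (j : nat) :
  ee p q r eps s (S j) = 1 /\
  mm p q r eps s (S j) = (INR (S j) - Hs (1 - eps - r) j) / (eps + r) /\
  nn p q r eps s (S j) = (eps * INR (S j) + r * Hs (1 - eps - r) j / (1 - eps - r)) / (eps + r).
Proof.
  induction j as [|j [He [Hm Hn]]].
  - destruct (base_vals p q r eps s) as [? [? ?]]. simpl Hs. repeat split; auto.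
    + rewrite H. simpl INR. field. lra.
    + rewrite H0. simpl INR. field. lra.
  - destruct (rec_all p q r eps s hpqr (S j)) as [Rm [Rn Re]]; [lia|].
    assert (HS : INR (S j) <> 0) by (apply not_0_INR; lia).
    repeat split.
    + rewrite Re; auto.
    + rewrite Rm, Hm, Hn, He, hg. change (Hs (1 - eps - r) (S j)) with
        (Hs (1 - eps - r) j * (INR (S j) + (1 - eps - r)) / INR (S j)).
      rewrite (S_INR (S j)). field. lra.
    + rewrite Rn, Hn, He. change (Hs (1 - eps - r) (S j)) with
        (Hs (1 - eps - r) j * (INR (S j) + (1 - eps - r)) / INR (S j)).
      rewrite (S_INR (S j)). field. lra.
Qed.

Lemma cv_ext_ev (u v : nat -> R) l N : (forall n, (N <= n)%nat -> u n = v n) -> Un_cv u l -> Un_cv v l.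
Proof.
  intros H Hu e He. destruct (Hu e He) as [M HM]. exists (max N M). intros n Hn.
  rewrite <- H by lia. apply HM. lia.
Qed.

Lemma cv_const c : Un_cv (fun _ => c) c.
Proof. intros e He. exists 0%nat. intros. unfold R_dist. rewrite Rminus_diag, Rabs_R0. lra. Qed.

Lemma cv_c_over c d : 0 <= d -> Un_cv (fun n => c / (INR n + d)) 0.
Proof.
  intros Hd e He. destruct (INR_archimed e (Rabs c) He) as [n0 Hn0].
  exists (S n0). intros n Hn. unfold R_dist. rewrite Rminus_0_r.
  assert (H1 : INR n0 < INR n) by (apply lt_INR; lia).
  assert (H0 : 0 <= INR n0) by apply pos_INR.
  unfold Rdiv. rewrite Rabs_mult, Rabs_inv, (Rabs_right (INR n + d)) by lra.
  apply (Rmult_lt_reg_r (INR n + d)); [lra|]. rewrite Rmult_assoc, Rinv_l by lra.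
  rewrite Rmult_1_r. nra.
Qed.

Lemma Gamma_eq z L : Un_cv (gauss_seq z) L -> Gamma z = L.
Proof.
  intros H. unfold Gamma. apply (UL_sequence (gauss_seq z)); auto.
  apply epsilon_spec. exists L; auto.
Qed.

Lemma rp_pos z n : 0 < z -> 0 < rising_prod z n.
Proof. intros Hz; induction n; simpl; auto. apply Rmult_lt_0_compat; auto.
  pose proof (pos_INR n). destruct n; simpl in *; lra. Qed.

Lemma rp_nz z n : z <> 0 -> -1 < z -> rising_prod z n <> 0.
Proof. intros Hz Hz1; induction n; cbn [rising_prod]; auto. apply Rmult_integral_contrapositive; split; auto.
  pose proof (pos_INR n). rewrite S_INR. lra. Qed.

Lemma rp_shift z n : rising_prod (z + 1) n * z = rising_prod z n * (z + 1 + INR n).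
Proof. induction n; cbn [rising_prod]. simpl INR; ring.
  rewrite Rmult_assoc, (Rmult_comm _ z), <- Rmult_assoc, IHn. rewrite S_INR. ring. Qed.

Lemma gauss_shift z n : z <> 0 -> -1 < z -> (1 <= n)%nat ->
  gauss_seq (z + 1) n * (z + 1 + INR n) = gauss_seq z n * INR n * z.
Proof.
  intros Hz Hz1 Hn. unfold gauss_seq.
  assert (HN : 0 < INR n) by (apply lt_0_INR; lia).
  rewrite Rpower_plus, Rpower_1 by auto.
  pose proof (rp_nz z n Hz Hz1) as HA. pose proof (rp_nz (z + 1) n ltac:(lra) ltac:(lra)) as HB.
  pose proof (rp_shift z n) as Hs.
  replace (z + 1 + INR n) with (rising_prod (z + 1) n * z / rising_prod z n) by (field_simplify_eq; auto; lra).
  field. auto.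
Qed.

Lemma shift_fwd z L : z <> 0 -> -1 < z -> Un_cv (gauss_seq z) L -> Un_cv (gauss_seq (z + 1)) (z * L).
Proof.
  intros Hz Hz1 H.
  apply (cv_ext_ev (fun n => gauss_seq z n * (z * (1 - (z + 1) / (INR n + (z + 1))))) _ _ 1).
  - intros n Hn. pose proof (gauss_shift z n Hz Hz1 Hn) as G. pose proof (pos_INR n).
    apply (Rmult_eq_reg_r (z + 1 + INR n)); [|lra]. rewrite G. field. lra.
  - replace (z * L) with (L * (z * (1 - 0))) by ring.
    apply CV_mult; auto. apply CV_mult; [apply cv_const|]. apply CV_minus; [apply cv_const|].
    apply cv_c_over. lra.
Qed.

Lemma shift_bwd a L : -1 < a < 0 -> Un_cv (gauss_seq (a + 1)) L -> Un_cv (gauss_seq a) (L / a).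
Proof.
  intros Ha H.
  apply (cv_ext_ev (fun n => gauss_seq (a + 1) n * ((1 + (a + 1) / (INR n + 0)) / a)) _ _ 1).
  - intros n Hn. pose proof (gauss_shift a n ltac:(lra) ltac:(lra) Hn) as G.
    assert (HN : 0 < INR n) by (apply lt_0_INR; lia).
    apply (Rmult_eq_reg_r (INR n * a)); [|apply Rmult_integral_contrapositive; split; lra].
    replace (gauss_seq a n * (INR n * a)) with (gauss_seq a n * INR n * a) by ring. rewrite <- G. field. lra.
  - replace (L / a) with (L * ((1 + 0) / a)) by (field; lra).
    apply CV_mult; auto. unfold Rdiv at 2. apply CV_mult; [|apply cv_const].
    apply CV_plus; [apply cv_const|]. apply cv_c_over. lra.
Qed.

Lemma exp_le x y : x <= y -> exp x <= exp y.
Proof. intros [H| ->]; [left; apply exp_increasing; auto| right; auto]. Qed.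

Lemma ln_diff x y : 0 < x -> 0 < y -> (y - x) / y <= ln y - ln x <= (y - x) / x.
Proof.
  intros Hx Hy. split.
  - pose proof (exp_ineq1_le (ln (x / y))) as H. rewrite exp_ln in H by (apply Rdiv_lt_0_compat; auto).
    unfold Rdiv in H. rewrite ln_mult, ln_Rinv in H by (auto; apply Rinv_0_lt_compat; auto).
    replace ((y - x) / y) with (1 - x * / y) by (field; lra). lra.
  - pose proof (exp_ineq1_le (ln (y / x))) as H. rewrite exp_ln in H by (apply Rdiv_lt_0_compat; auto).
    unfold Rdiv in H. rewrite ln_mult, ln_Rinv in H by (auto; apply Rinv_0_lt_compat; auto).
    replace ((y - x) / x) with (y * / x - 1) by (field; lra). lra.
Qed.

Lemma g_pos z n : 0 < z -> 0 < gauss_seq z n.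
Proof.
  intros Hz. unfold gauss_seq, Rpower. apply Rdiv_lt_0_compat; [|apply rp_pos; auto].
  apply Rmult_lt_0_compat; [|apply exp_pos]. apply INR_fact_lt_0.
Qed.

Lemma g_rec z n : 0 < z -> (1 <= n)%nat ->
  gauss_seq z (S n) = gauss_seq z n * ((INR n + 1) / (INR n + 1 + z))
                      * exp (z * (ln (INR n + 1) - ln (INR n))).
Proof.
  intros Hz Hn. unfold gauss_seq, Rpower. cbn [rising_prod].
  change (Factorial.fact (S n)) with (S n * Factorial.fact n)%nat. rewrite mult_INR, S_INR.
  replace (z * ln (INR n + 1)) with (z * (ln (INR n + 1) - ln (INR n)) + z * ln (INR n)) by ring.
  rewrite exp_plus. pose proof (rp_pos z n Hz). pose proof (pos_INR n). field. lra.
Qed.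

Lemma g_incr z n : 0 < z -> (1 <= n)%nat -> gauss_seq z n <= gauss_seq z (S n).
Proof.
  intros Hz Hn. rewrite g_rec by auto.
  assert (HN : 0 < INR n) by (apply lt_0_INR; lia).
  destruct (ln_diff (INR n) (INR n + 1) HN ltac:(lra)) as [D1 _].
  pose proof (exp_ineq1_le (z * (ln (INR n + 1) - ln (INR n)))) as E1.
  assert (K : 1 <= (INR n + 1) / (INR n + 1 + z) * exp (z * (ln (INR n + 1) - ln (INR n)))).
  { apply Rle_trans with ((INR n + 1) / (INR n + 1 + z) * (1 + z * ((INR n + 1 - INR n) / (INR n + 1)))).
    - right. field. lra.
    - apply Rmult_le_compat_l. apply Rlt_le, Rdiv_lt_0_compat; lra.
      eapply Rle_trans; [|apply E1]. apply Rplus_le_compat_l. apply Rmult_le_compat_l; lra. }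
  pose proof (g_pos z n Hz). rewrite Rmult_assoc. nra.
Qed.

Lemma g_dec z n : 0 < z <= 1 -> (1 <= n)%nat ->
  gauss_seq z (S n) * exp (2 * z / (INR n + 1)) <= gauss_seq z n * exp (2 * z / INR n).
Proof.
  intros Hz Hn. rewrite g_rec by (auto; lra).
  assert (HN : 0 < INR n) by (apply lt_0_INR; lia).
  destruct (ln_diff (INR n) (INR n + 1) HN ltac:(lra)) as [_ D2].
  destruct (ln_diff (INR n + 1) (INR n + 1 + z) ltac:(lra) ltac:(lra)) as [D3 _].
  assert (B1 : (INR n + 1) / (INR n + 1 + z) <= exp (- (z / (INR n + 2)))).
  { replace ((INR n + 1) / (INR n + 1 + z)) with (exp (ln (INR n + 1) - ln (INR n + 1 + z))).
    - apply exp_le. assert (z / (INR n + 2) <= (INR n + 1 + z - (INR n + 1)) / (INR n + 1 + z)).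
      { replace (INR n + 1 + z - (INR n + 1)) with z by ring.
        apply Rmult_le_compat_l; [lra|]. apply Rinv_le_contravar; lra. }
      lra.
    - unfold Rminus. rewrite exp_plus, <- ln_Rinv, !exp_ln by (try apply Rinv_0_lt_compat; lra).
      reflexivity. }
  assert (B2 : exp (z * (ln (INR n + 1) - ln (INR n))) <= exp (z / INR n)).
  { apply exp_le. replace (z / INR n) with (z * ((INR n + 1 - INR n) / INR n)) by (field; lra).
    apply Rmult_le_compat_l; lra. }
  assert (B3 : - (z / (INR n + 2)) + z / INR n + 2 * z / (INR n + 1) <= 2 * z / INR n).
  { assert (Eq : 2 * z / INR n - (- (z / (INR n + 2)) + z / INR n + 2 * z / (INR n + 1))
                 = 2 * z / (INR n * (INR n + 1) * (INR n + 2))) by (field; lra).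
    assert (0 <= 2 * z / (INR n * (INR n + 1) * (INR n + 2))).
    { apply Rlt_le, Rdiv_lt_0_compat; [lra|]. repeat apply Rmult_lt_0_compat; lra. }
    lra. }
  pose proof (g_pos z n ltac:(lra)) as Gp.
  rewrite !Rmult_assoc. apply Rmult_le_compat_l; [lra|].
  apply Rle_trans with (exp (- (z / (INR n + 2))) * (exp (z / INR n) * exp (2 * z / (INR n + 1)))).
  - apply Rmult_le_compat; auto.
    + apply Rlt_le, Rdiv_lt_0_compat; lra.
    + apply Rlt_le, Rmult_lt_0_compat; apply exp_pos.
    + apply Rmult_le_compat_r; [apply Rlt_le, exp_pos|auto].
  - rewrite <- !exp_plus. apply exp_le. lra.
Qed.

Lemma g_bound z n : 0 < z <= 1 -> (1 <= n)%nat -> gauss_seq z n <= gauss_seq z 1 * exp (2 * z).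
Proof.
  intros Hz Hn.
  assert (H : forall k, gauss_seq z (S k) * exp (2 * z / INR (S k)) <= gauss_seq z 1 * exp (2 * z)).
  { induction k.
    - simpl INR. rewrite Rdiv_1_r. lra.
    - eapply Rle_trans; [|apply IHk]. rewrite (S_INR (S k)). apply g_dec; auto. lia. }
  destruct n as [|k]; [lia|]. eapply Rle_trans; [|apply (H k)].
  pose proof (g_pos z (S k) ltac:(lra)).
  assert (0 <= 2 * z / INR (S k)) by (apply Rlt_le, Rdiv_lt_0_compat; [lra| apply lt_0_INR; lia]).
  pose proof (exp_ineq1_le (2 * z / INR (S k))). nra.
Qed.

Lemma cv_shift1 (u : nat -> R) l : Un_cv (fun k => u (S k)) l -> Un_cv u l.
Proof.
  intros H e He. destruct (H e He) as [N HN]. exists (S N). intros n Hn.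
  replace n with (S (pred n)) by lia. apply HN. lia.
Qed.

Lemma base_conv z : 0 < z <= 1 -> exists L, Un_cv (gauss_seq z) L /\ 0 < L.
Proof.
  intros Hz.
  assert (Gr : Un_growing (fun k => gauss_seq z (S k))).
  { intros k. apply g_incr; [lra|lia]. }
  assert (Ub : has_ub (fun k => gauss_seq z (S k))).
  { exists (gauss_seq z 1 * exp (2 * z)). intros x [i ->]. apply g_bound; auto. lia. }
  destruct (growing_cv _ Gr Ub) as [l Hl]. exists l. split.
  - apply cv_shift1; auto.
  - pose proof (growing_ineq _ _ Gr Hl 0). pose proof (g_pos z 1 ltac:(lra)). simpl in *. lra.
Qed.

Lemma conv_pos w : 0 < w -> exists L, Un_cv (gauss_seq w) L /\ 0 < L.
Proof.
  intros Hw. destruct (INR_archimed 1 w ltac:(lra)) as [N HN]. rewrite Rmult_1_r in HN.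
  assert (H : forall N w, 0 < w <= INR N + 1 -> exists L, Un_cv (gauss_seq w) L /\ 0 < L).
  { clear. induction N; intros w Hw.
    - apply base_conv. simpl in Hw. lra.
    - destruct (Rle_dec w 1). apply base_conv; lra.
      destruct (IHN (w - 1)) as [L [HL HL0]]. rewrite S_INR in Hw. lra.
      exists ((w - 1) * L). split.
      + replace w with (w - 1 + 1) at 1 by ring. apply shift_fwd; auto; lra.
      + apply Rmult_lt_0_compat; lra. }
  apply (H N). lra.
Qed.

Lemma Gamma_succ w : 0 < w -> Gamma (w + 1) = w * Gamma w /\ 0 < Gamma w.
Proof.
  intros Hw. destruct (conv_pos w Hw) as [L [HL HL0]].
  rewrite (Gamma_eq _ _ HL). rewrite (Gamma_eq _ _ (shift_fwd w L ltac:(lra) ltac:(lra) HL)). auto.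
Qed.

Lemma rp_one n : rising_prod 1 n = INR (Factorial.fact (S n)).
Proof.
  induction n; cbn [rising_prod]. simpl; ring.
  rewrite IHn. change (Factorial.fact (S (S n))) with (S (S n) * Factorial.fact (S n))%nat.
  rewrite mult_INR, !S_INR. ring.
Qed.

Lemma Gamma_1 : Gamma 1 = 1.
Proof.
  apply Gamma_eq.
  apply (cv_ext_ev (fun n => 1 - 1 / (INR n + 1)) _ _ 1).
  - intros n Hn. unfold gauss_seq. rewrite rp_one, Rpower_1 by (apply lt_0_INR; lia).
    change (Factorial.fact (S n)) with (S n * Factorial.fact n)%nat. rewrite mult_INR, S_INR.
    pose proof (INR_fact_lt_0 n). pose proof (pos_INR n). field. lra.
  - assert (H : Un_cv (fun n => 1 - 1 / (INR n + 1)) (1 - 0)).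
    { apply CV_minus; [apply cv_const|]. apply cv_c_over. lra. }
    rewrite Rminus_0_r in H. exact H.
Qed.

Lemma Gamma_nat j : Gamma (INR (S j)) = INR (Factorial.fact j).
Proof.
  induction j. simpl. apply Gamma_1.
  rewrite (S_INR (S j)). destruct (Gamma_succ (INR (S j))) as [G _]. apply lt_0_INR; lia.
  rewrite G, IHj. change (Factorial.fact (S j)) with (S j * Factorial.fact j)%nat.
  rewrite mult_INR. ring.
Qed.

Lemma Gamma_a a : -1 < a < 1 -> a <> 0 -> Gamma (a + 1) = a * Gamma a /\ Gamma a <> 0.
Proof.
  intros Ha Ha0. destruct (Rlt_dec 0 a).
  - destruct (Gamma_succ a r) as [G1 G2]. split; auto. lra.
  - destruct (conv_pos (a + 1) ltac:(lra)) as [L [HL HL0]].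
    pose proof (shift_bwd a L ltac:(lra) HL) as HB.
    rewrite (Gamma_eq _ _ HL), (Gamma_eq _ _ HB). split. field. auto.
    unfold Rdiv. apply Rmult_integral_contrapositive; split; [lra|]. apply Rinv_neq_0_compat; auto.
Qed.

Lemma Gamma_Hs a j : -1 < a < 1 -> a <> 0 ->
  Gamma (INR (S j) + a) = Gamma a * Gamma (INR (S j)) * Hs a j.
Proof.
  intros Ha Ha0. induction j.
  - simpl INR. rewrite Gamma_1, Rplus_comm. destruct (Gamma_a a Ha Ha0) as [G _]. rewrite G. simpl. ring.
  - rewrite (S_INR (S j)). replace (INR (S j) + 1 + a) with ((INR (S j) + a) + 1) by ring.
    assert (Hp : 1 <= INR (S j)) by (rewrite S_INR; pose proof (pos_INR j); lra).
    destruct (Gamma_succ (INR (S j) + a)) as [G _]; [lra|].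
    destruct (Gamma_succ (INR (S j))) as [G2 _]; [lra|].
    rewrite G, G2, IHj. change (Hs a (S j)) with (Hs a j * (INR (S j) + a) / INR (S j)).
    field. lra.
Qed.

Lemma P_bound a j : -1 < a < 1 ->
  Rabs (Hs a j / INR (S j)) <= Rabs a * exp (- (1 - a) * (ln (INR j + 2) - ln 2)).
Proof.
  intros Ha. induction j.
  - simpl INR. replace (0 + 2) with 2 by ring. rewrite Rminus_diag, Rmult_0_r, exp_0.
    simpl Hs. rewrite Rdiv_1_r. lra.
  - change (Hs a (S j)) with (Hs a j * (INR (S j) + a) / INR (S j)).
    assert (Hx : 0 < INR j + 2) by (pose proof (pos_INR j); lra).
    replace (Hs a j * (INR (S j) + a) / INR (S j) / INR (S (S j)))
      with (Hs a j / INR (S j) * ((INR j + 1 + a) / (INR j + 2))).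
    2:{ rewrite !S_INR. field. pose proof (pos_INR j); lra. }
    rewrite Rabs_mult, (Rabs_right ((INR j + 1 + a) / (INR j + 2))).
    2:{ apply Rle_ge, Rlt_le, Rdiv_lt_0_compat; pose proof (pos_INR j); lra. }
    replace (- (1 - a) * (ln (INR (S j) + 2) - ln 2)) with
      (- (1 - a) * (ln (INR j + 2) - ln 2) + - (1 - a) * (ln (INR j + 2 + 1) - ln (INR j + 2))).
    2:{ rewrite S_INR. replace (INR j + 1 + 2) with (INR j + 2 + 1) by ring. ring. }
    rewrite exp_plus, <- Rmult_assoc. apply Rmult_le_compat; auto.
    + apply Rabs_pos.
    + apply Rlt_le, Rdiv_lt_0_compat; pose proof (pos_INR j); lra.
    + destruct (ln_diff (INR j + 2) (INR j + 2 + 1) Hx ltac:(lra)) as [_ D].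
      pose proof (exp_ineq1_le (- ((1 - a) / (INR j + 2)))) as E1.
      eapply Rle_trans; [|apply exp_le].
      * replace ((INR j + 1 + a) / (INR j + 2)) with (1 + - ((1 - a) / (INR j + 2))) by (field; lra).
        apply E1.
      * replace ((1 - a) / (INR j + 2)) with ((1 - a) * ((INR j + 2 + 1 - (INR j + 2)) / (INR j + 2))) by (field; lra).
        assert (0 < 1 - a) by lra. nra.
Qed.

Lemma P_cv a : -1 < a < 1 -> Un_cv (fun j => Hs a j / INR (S j)) 0.
Proof.
  intros Ha e He. set (K := Rabs a + 1). set (c := 1 - a).
  assert (HK : 0 < K) by (unfold K; pose proof (Rabs_pos a); lra).
  assert (Hc : 0 < c) by (unfold c; lra).
  set (M := ln 2 - ln (e / K) / c).
  destruct (INR_archimed 1 (exp M) ltac:(lra)) as [N HN]. rewrite Rmult_1_r in HN.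
  exists N. intros j Hj. unfold R_dist. rewrite Rminus_0_r.
  eapply Rle_lt_trans; [apply P_bound; auto|].
  assert (HjN : INR N <= INR j) by (apply le_INR; lia).
  assert (Hl : M < ln (INR j + 2)).
  { rewrite <- (ln_exp M). apply ln_increasing; [apply exp_pos|lra]. }
  assert (Hexp : exp (- (1 - a) * (ln (INR j + 2) - ln 2)) < e / K).
  { rewrite <- (exp_ln (e / K)) by (apply Rdiv_lt_0_compat; lra). apply exp_increasing.
    fold c. unfold M in Hl.
    assert (ln (e / K) / c * c = ln (e / K)) by (field; lra).
    assert (c * (ln (INR j + 2) - ln 2) > - (ln (e / K) / c) * c).
    { apply Rmult_gt_compat_l with (r := c) in Hl; [|lra]. nra. }
    nra. }
  apply Rle_lt_trans with (K * exp (- (1 - a) * (ln (INR j + 2) - ln 2))).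
  - apply Rmult_le_compat_r; [apply Rlt_le, exp_pos|]. unfold K; lra.
  - apply (Rmult_lt_compat_l K) in Hexp; auto. replace (K * (e / K)) with e in Hexp by (field; lra). auto.
Qed.

Theorem mainTheorem7 (p q r eps s : R)
  (hp : 0 < p < 1) (hq : 0 < q < 1) (hr : 0 < r < 1) (hpqr : p + q + r = 1)
  (heps : 0 < eps < 1) (hs : 0 < s < 1)
  (hne : eps + r <> 1) (hgamma : p - q = (1 - eps) / 2) :
  (forall t : nat, (1 <= t)%nat ->
     second_moment p q r eps s t =
       INR t / (eps + r)
       - 1 / ((eps + r) * Gamma (1 - eps - r))
         * (Gamma (INR t + 1 - eps - r) / Gamma (INR t)))
  /\ Un_cv (fun t => second_moment p q r eps s t / INR t) (1 / (eps + r)).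
Proof.
  assert (Hu : 0 < eps + r) by lra.
  assert (Ha : -1 < 1 - eps - r < 1) by lra.
  assert (Ha0 : 1 - eps - r <> 0) by lra.
  assert (SM : forall t, second_moment p q r eps s t = mm p q r eps s t) by reflexivity.
  split.
  - intros t Ht. destruct t as [|j]; [lia|]. rewrite SM.
    destruct (closed_form p q r eps s hpqr Hu Ha0 hgamma j) as [_ [Hm _]]. rewrite Hm.
    replace (INR (S j) + 1 - eps - r) with (INR (S j) + (1 - eps - r)) by ring.
    rewrite Gamma_Hs by auto.
    destruct (Gamma_a _ Ha Ha0) as [_ Gnz].
    assert (Gt : Gamma (INR (S j)) <> 0) by (rewrite Gamma_nat; apply INR_fact_neq_0).
    field. split; [auto|lra].
  - intros e He. destruct (P_cv (1 - eps - r) Ha (e * (eps + r)) ltac:(nra)) as [N HN].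
    exists (S N). intros n Hn. destruct n as [|j]; [lia|].
    specialize (HN j ltac:(lia)). unfold R_dist in *. rewrite Rminus_0_r in HN.
    rewrite SM. destruct (closed_form p q r eps s hpqr Hu Ha0 hgamma j) as [_ [Hm _]]. rewrite Hm.
    assert (Hs0 : INR (S j) <> 0) by (apply not_0_INR; lia).
    replace ((INR (S j) - Hs (1 - eps - r) j) / (eps + r) / INR (S j) - 1 / (eps + r))
      with (- (Hs (1 - eps - r) j / INR (S j)) / (eps + r)) by (field; lra).
    unfold Rdiv at 1. rewrite Rabs_mult, Rabs_Ropp, Rabs_inv, (Rabs_right (eps + r)) by lra.
    apply (Rmult_lt_reg_r (eps + r)); auto. rewrite Rmult_assoc, Rinv_l by lra. lra.
Qed.
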